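(* Let $n\geq 2$ be an integer, let $\mathcal{F}=(W,R)$ be a finite transitive frame and let $X_\mathcal{F}$ be constructed as described in the context. If $X_C$ is hereditarily $n$-irresolvable for every cluster $C$ of $\mathcal{F}$, then $X_\mathcal{F}$ is hereditarily $n$-irresolvable.
   Context: A space $X$ is $k$-resolvable ($k\ge 2$) if it has $k$ pairwise disjoint non-empty dense subsets, $k$-irresolvable otherwise, and hereditarily $k$-irresolvable if every non-empty subspace is $k$-irresolvable. For $Y\subseteq X$, $\mathrm{d}_XY$ is the set of limit points of $Y$; $S$ is crowded in $X$ if $S\subseteq\mathrm{d}_XS$. A partition is dense (resp. crowded) if all its cells are dense (resp. crowded). For a transitive frame $(W,R)$: clusters are equivalence classes of $\{(x,y):x=y\text{ or }xRyRx\}$; the cluster of $x$ is degenerate if $x$ is irreflexive (then it is $\{x\}$), non-degenerate otherwise; $CRC'$ for clusters iff $xRy$ for representatives; $CR^\uparrow C'$ means $CRC'$ and not $C'RC$. Construction of $X_\mathcal{F}$: let $\mathscr{C}$ be the set of clusters of the finite transitive frame $\mathcal{F}$. For each $C\in\mathscr{C}$ choose a space $X_C$ with a partition $\{X_w:w\in C\}$: if $C=\{w\}$ is degenerate, $X_C=X_w=\{w\}$; if $C=\{w_1,\dots,w_k\}$ is non-degenerate, $X_C$ is a space with a crowded dense $k$-partition with cells labelled $X_{w_1},\dots,X_{w_k}$. The $X_C$ are pairwise disjoint. $X_\mathcal{F}=\bigcup_{C}X_C$, where $O\subseteq X_\mathcal{F}$ is open iff for every $C$, $O\cap X_C$ is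 open in $X_C$, and if $O\cap X_C\ne\emptyset$ then $X_{C'}\subseteq O$ for all $C'$ with $CR^\uparrow C'$. *)

(* Defs.v *)
From mathcomp Require Import all_boot.
From mathcomp Require Import boolp classical_sets.
Set Implicit Arguments. Unset Strict Implicit. Unset Printing Implicit Defensive.
Local Open Scope classical_set_scope.

(* A (sub)space is given by a carrier set S inside an ambient type T together
   with its family of open sets op (all subsets of S). *)
Definition is_topology {T : Type} (S : set T) (op : set T -> Prop) : Prop :=
  [/\ (forall U, op U -> U `<=` S),
      op set0, op S,
      (forall G : set (set T), G `<=` op -> op (\bigcup_(U in G) U))
    & (forall U V, op U -> op V -> op (U `&` V))].

Definition subspace_open {T : Type} (op : set T -> Prop) (Y : set T) (V : set T) : Prop :=
  exists U, op U /\ V = U `&` Y.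

Definition dense_in {T : Type} (S : set T) (op : set T -> Prop) (D : set T) : Prop :=
  D `<=` S /\ (forall U, op U -> U !=set0 -> U `&` D !=set0).

Definition limit_points {T : Type} (S : set T) (op : set T -> Prop) (Y : set T) : set T :=
  [set x | S x /\ (forall U, op U -> U x -> exists y, [/\ U y, Y y & y <> x])].

Definition crowded_in {T : Type} (S : set T) (op : set T -> Prop) (A : set T) : Prop :=
  A `<=` limit_points S op A.

Definition resolvable {T : Type} (k : nat) (S : set T) (op : set T -> Prop) : Prop :=
  exists D : 'I_k -> set T,
    [/\ (forall i, D i !=set0),
        (forall i j, i != j -> D i `&` D j = set0)
      & (forall i, dense_in S op (D i))].

Definition irresolvable {T : Type} (k : nat) (S : set T) (op : set T -> Prop) : Prop :=
  ~ resolvable k S op.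

Definition hered_irresolvable {T : Type} (k : nat) (S : set T) (op : set T -> Prop) : Prop :=
  forall Y : set T, Y `<=` S -> Y !=set0 -> irresolvable k Y (subspace_open op Y).

Definition cluster {W : finType} (R : rel W) (w : W) : {set W} :=
  [set v | (v == w) || (R w v && R v w)].

(* The construction X_F: the carrier is the ambient type T, each point x lies in the
   cell X_(lab x); X_C for the cluster C of w is the union of the cells X_v, v in C. *)
Definition Xcell {T : Type} {W : finType} (lab : T -> W) (v : W) : set T :=
  [set x | lab x = v].

Definition Xclus {T : Type} {W : finType} (R : rel W) (lab : T -> W) (w : W) : set T :=
  [set x | lab x \in cluster R w].

Definition XF_construction {T : Type} {W : finType} (R : rel W) (lab : T -> W)
    (tau : {set W} -> set T -> Prop) : Prop :=
  forall w : W,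
    is_topology (Xclus R lab w) (tau (cluster R w)) /\
    (if R w w then
       (* non-degenerate cluster: {X_v : v in C} is a crowded dense partition of X_C *)
       forall v, v \in cluster R w ->
         [/\ Xcell lab v !=set0,
             dense_in (Xclus R lab w) (tau (cluster R w)) (Xcell lab v)
           & crowded_in (Xclus R lab w) (tau (cluster R w)) (Xcell lab v)]
     else
       (* degenerate cluster {w}: X_C = X_w is a single point *)
       exists x : T, Xclus R lab w = [set x]).

Definition XF_open {T : Type} {W : finType} (R : rel W) (lab : T -> W)
    (tau : {set W} -> set T -> Prop) (O : set T) : Prop :=
  forall w : W,
    tau (cluster R w) (O `&` Xclus R lab w) /\
    (O `&` Xclus R lab w !=set0 ->
       forall v : W, R w v -> ~~ R v w -> Xclus R lab v `<=` O).

(* Main.v *)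
Require Import Defs.
From mathcomp Require Import all_boot.
From mathcomp Require Import boolp classical_sets.
Local Open Scope classical_set_scope.
Set Implicit Arguments. Unset Strict Implicit.

Section Aux.
Variables (W : finType) (R : rel W).
Hypothesis Rt : transitive R.

Definition sR (w v : W) := R w v && ~~ R v w.

Lemma inclP (w v : W) : v \in cluster R w = (v == w) || (R w v && R v w).
Proof. by rewrite inE. Qed.

Lemma cl_sym u y : y \in cluster R u -> u \in cluster R y.
Proof. rewrite !inclP => /orP [/eqP->|/andP[a b]]; first by rewrite eqxx.
by rewrite a b orbT. Qed.

Lemma cl_trans u y z : y \in cluster R u -> z \in cluster R y -> z \in cluster R u.
Proof.
rewrite !inclP => /orP [/eqP->//|/andP[a b]] /orP [/eqP->|/andP[c d]].
  by rewrite a b orbT.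
by rewrite (Rt a c) (Rt d b) orbT.
Qed.

Lemma cl_eq u w : u \in cluster R w -> cluster R u = cluster R w.
Proof.
move=> h; apply/setP => y; apply/idP/idP => hy.
  exact: cl_trans h hy.
exact: cl_trans (cl_sym h) hy.

Qed.

Lemma L1 u w v : u \in cluster R w -> sR u v -> sR w v.
Proof.
rewrite inclP /sR => /orP [/eqP->//|/andP[a b]] /andP[c d].
rewrite (Rt a c) /=; apply/negP => e; by rewrite (Rt e a) in d.
Qed.

Lemma L2 w v y : sR w v -> y \in cluster R v -> sR w y.
Proof.
rewrite inclP /sR => /andP[a b] /orP [/eqP->|/andP[c d]]; first by rewrite a b.
rewrite (Rt a c) /=; apply/negP => e; by rewrite (Rt c e) in b.
Qed.

Lemma L3 w u v : sR w u -> sR u v -> sR w v.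
Proof.
rewrite /sR => /andP[a b] /andP[c d]; rewrite (Rt a c) /=.
apply/negP => e; by rewrite (Rt e a) in d.
Qed.

Lemma sR_ncl w y : y \in cluster R w -> ~~ sR w y.
Proof.
rewrite inclP /sR => /orP [/eqP->|/andP[a b]]; first by rewrite andbN.
by rewrite b andbF.
Qed.

Lemma meas_lt w v : sR w v ->
  (#|[set u | (u == v) || R v u]%SET| < #|[set u | (u == w) || R w u]%SET|)%N.
Proof.
rewrite /sR => /andP[a b]; apply: proper_card; apply/properP; split.
  apply/fintype.subsetP => u; rewrite !inE => /orP [/eqP->|c]; first by rewrite a orbT.
  by rewrite (Rt a c) orbT.
exists w; first by rewrite inE eqxx.
rewrite inE negb_or (negbTE b) andbT; apply/eqP => e; subst v.
by rewrite a in b.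
Qed.

Lemma exists_max (P : W -> Prop) y : P y ->
  exists w, P w /\ forall v, P v -> ~~ sR w v.
Proof.
move: {2}#|_| (leqnn #|[set u | (u == y) || R y u]%SET|) => k.
elim: k y => [|k IH] y hk Py.
  case: (pselect (exists v, P v /\ sR y v)) => [[v [Pv s]]|h].
    by have := meas_lt s; rewrite ltnNge => /negP; case; apply: leq_trans hk _.
  exists y; split => // v Pv; apply/negP => s; apply: h; by exists v.
case: (pselect (exists v, P v /\ sR y v)) => [[v [Pv s]]|h].
  apply: (IH v) => //; have := meas_lt s => lt.
  by rewrite -ltnS; apply: leq_trans lt hk.
exists y; split => // v Pv; apply/negP => s; apply: h; by exists v.
Qed.

End Aux.

Theorem lemma5 (n : nat) (W : finType) (R : rel W) (T : Type)
    (lab : T -> W) (tau : {set W} -> set T -> Prop) :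
  (2 <= n)%N ->
  transitive R ->
  XF_construction R lab tau ->
  (forall w : W, hered_irresolvable n (Xclus R lab w) (tau (cluster R w))) ->
  hered_irresolvable n setT (XF_open R lab tau).
Proof.
move=> _ Rt Hc Hh Y _ [x0 Yx0] [D [Dne Ddisj Dden]].
have top u : is_topology (Xclus R lab u) (tau (cluster R u)) by case: (Hc u).
pose P := fun y => exists x, Y x /\ lab x = y.
have [w [Pw wmax]] := exists_max Rt (ex_intro (fun x => Y x /\ lab x = lab x0) x0 (conj Yx0 erefl)) : exists w, P w /\ _.
have Oopen U' : tau (cluster R w) U' ->
    XF_open R lab tau [set x | U' x \/ sR R w (lab x)].
  move=> tU; have sU : U' `<=` Xclus R lab w by case: (top w) => + _ _ _ _; apply.
  move=> u.
  case: (boolP (u \in cluster R w)) => [uw|nuw].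
    split.
      rewrite (cl_eq Rt uw).
      have -> : [set x | U' x \/ sR R w (lab x)] `&` Xclus R lab u = U'; last by [].
      apply/seteqP; split => x /=.
        move=> [[//|s] xu]; exfalso.
        have := sR_ncl (cl_trans Rt uw xu); by rewrite s.
      move=> Ux; split; [by left|].
      have := sU _ Ux; rewrite /Xclus /= => h; exact: (cl_trans Rt (cl_sym uw) h).
    move=> _ v a b x xv; right; apply: (L2 Rt (L1 Rt uw (_ : sR R u v)) xv).
    by rewrite /sR a b.
  case: (boolP (sR R w u)) => [swu|nswu].
    split.
      have -> : [set x | U' x \/ sR R w (lab x)] `&` Xclus R lab u = Xclus R lab u.
        apply/seteqP; split => x /=; first by case.
        move=> xu; split => //; right; exact: (L2 Rt swu xu).
      by case: (top u).
    move=> _ v a b x xv; right; apply: (L2 Rt (L3 Rt swu (_ : sR R u v)) xv).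
    by rewrite /sR a b.
  have -> : [set x | U' x \/ sR R w (lab x)] `&` Xclus R lab u = set0.
    apply/seteqP; split => x //= [[Ux|s] xu].
      have := sU _ Ux; rewrite /Xclus /= => h.
      by move: nuw; rewrite (cl_trans Rt h (cl_sym xu)).
    by move: nswu; rewrite (L2 Rt s (cl_sym xu)).
  split; first by case: (top u).
  by move=> [x []].
have K U' i : tau (cluster R w) U' -> (U' `&` Y) !=set0 ->
    exists y, [/\ U' y, Y y & D i y].
  move=> tU [z [Uz Yz]].
  have [_ /(_ ([set x | U' x \/ sR R w (lab x)] `&` Y))] := Dden i.
  case.
  - exists [set x | U' x \/ sR R w (lab x)]; split => //; exact: Oopen.
  - exists z; split => //; by left.
  move=> y [[[Uy|s] Yy] Dy]; first by exists y.
  exfalso; have := wmax (lab y) (ex_intro _ y (conj Yy erefl)); by rewrite s.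
have wXw : is_topology (Xclus R lab w) (tau (cluster R w)) := top w.
have tX : tau (cluster R w) (Xclus R lab w) by case: wXw.
have sUw U' : tau (cluster R w) U' -> U' `<=` Xclus R lab w.
  by case: wXw => + _ _ _ _; apply.
have [x1 [Yx1 lx1]] := Pw.
have x1w : Xclus R lab w x1 by rewrite /Xclus /= lx1 inE eqxx.
apply: (Hh w (Y `&` Xclus R lab w)).
- by move=> x [].
- by exists x1.
exists (fun i => D i `&` Xclus R lab w); split.
- move=> i; have [y [Xy Yy Dy]] := K _ i tX (ex_intro _ x1 (conj x1w Yx1)).
  by exists y.
- move=> i j ij; apply/seteqP; split => x // [[Di _] [Dj _]].
  by rewrite -(Ddisj i j ij); split.
- move=> i; split.
    move=> x [Dx Xx]; split => //; by case: (Dden i) => + _; apply.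
  move=> V [U' [tU ->]] [z [Uz [Yz Xz]]].
  have [y [Uy Yy Dy]] := K _ i tU (ex_intro _ z (conj Uz Yz)).
  have Xy := sUw U' tU y Uy.
  by exists y; split; split.
Qed.
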